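(* Let $\lambda\in\mathbb{R}$, let $r,n\ge0$ be integers and let $z\in\mathbb{C}$. Then \[ \phi_{n+1,\lambda}^{(r)}(|z|^2)=\sum_{k=0}^{n}\binom{n}{k}(-\lambda)^{n-k}(n-k)!\Big(|z|^2\phi_{k,\lambda}^{(r+1)}(|z|^2)+r\,\phi_{k,\lambda}^{(r)}(|z|^2)\Big) =\sum_{k=0}^{n}\binom{n}{k}\big(r(-\lambda)_{k,\lambda}+|z|^2(1-\lambda)_{k,\lambda}\big)\phi_{n-k,\lambda}^{(r)}(|z|^2). \] In particular, for $|z|=1$, \[ \phi_{n+1,\lambda}^{(r)}=\sum_{k=0}^{n}\binom{n}{k}(-\lambda)^{n-k}(n-k)!\Big(\phi_{k,\lambda}^{(r+1)}+r\,\phi_{k,\lambda}^{(r)}\Big)=\sum_{k=0}^{n}\binom{n}{k}\big(r(-\lambda)_{k,\lambda}+(1-\lambda)_{k,\lambda}\big)\phi_{n-k,\lambda}^{(r)}. \]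
   Context: Notation: $(x)_0=1$, $(x)_m=x(x-1)\cdots(x-m+1)$; $(y)_{0,\lambda}=1$, $(y)_{n,\lambda}=y(y-\lambda)\cdots(y-(n-1)\lambda)$. The degenerate $r$-Stirling numbers of the second kind ${n+r\brace k+r}_{r,\lambda}$ are defined by $(x+r)_{n,\lambda}=\sum_{k=0}^{n}{n+r\brace k+r}_{r,\lambda}(x)_k$ ($n\ge0$), and the degenerate $r$-Bell polynomials are $\phi_{n,\lambda}^{(r)}(x)=\sum_{k=0}^{n}{n+r\brace k+r}_{r,\lambda}x^k$, with $\phi_{n,\lambda}^{(r)}=\phi_{n,\lambda}^{(r)}(1)$. *)

(* Defs.v *)
From mathcomp Require Import all_boot all_order all_algebra.
From mathcomp Require Import complex.
Set Implicit Arguments. Unset Strict Implicit. Unset Printing Implicit Defensive.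
Import Order.TTheory GRing.Theory Num.Theory.
Local Open Scope ring_scope.

Definition ffact {R : ringType} (x : R) (m : nat) : R :=
  \prod_(i < m) (x - i%:R).

Definition dffact {R : ringType} (y lam : R) (n : nat) : R :=
  \prod_(i < n) (y - i%:R * lam).

(* S r n k stands for the degenerate r-Stirling number {n+r brace k+r}_{r,lam},
   characterised (for 0 <= k <= n) by (x+r)_{n,lam} = sum_{k=0}^n S r n k (x)_k. *)
Definition is_degen_rStirling {R : ringType} (lam : R) (S : nat -> nat -> nat -> R) :=
  forall (r n : nat) (x : R),
    dffact (x + r%:R) lam n = \sum_(k < n.+1) S r n k * ffact x k.

Definition rBell {R : ringType} (S : nat -> nat -> nat -> R) (r n : nat) (x : R) : R :=
  \sum_(k < n.+1) S r n k * x ^+ k.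

(* Main.v *)
Require Import Defs.
From mathcomp Require Import all_boot all_order all_algebra.
From mathcomp Require Import complex ring.
Import Order.TTheory GRing.Theory Num.Theory.
Local Open Scope ring_scope.

Section L.
Variable R : numDomainType.
Implicit Types (x a b lam t : R).

Lemma ffactS x k : ffact x k.+1 = x * ffact (x - 1) k.
Proof.
rewrite /ffact big_ord_recl /= subr0; congr (_ * _); apply: eq_bigr => i _.
rewrite /bump leq0n add1n -addn1 natrD; ring.
Qed.

Lemma dffactS a lam k : dffact a lam k.+1 = a * dffact (a - lam) lam k.
Proof.
rewrite /dffact big_ord_recl /= mul0r subr0; congr (_ * _); apply: eq_bigr => i _.
rewrite /bump leq0n add1n -addn1 natrD; ring.
Qed.

Lemma dffactSr a lam k : dffact a lam k.+1 = dffact a lam k * (a - k%:R * lam).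
Proof. by rewrite /dffact big_ord_recr. Qed.

Lemma dffact_neg lam m : dffact (- lam) lam m = (- lam) ^+ m * m`!%:R.
Proof.
elim: m => [|m IH]; first by rewrite /dffact big_ord0 expr0 mul1r.
rewrite dffactSr IH factS natrM exprS; ring.
Qed.

Lemma dbinom a b lam n :
  dffact (a + b) lam n =
  \sum_(k < n.+1) 'C(n, k)%:R * dffact a lam k * dffact b lam (n - k).
Proof.
elim: n => [|n IH].
  by rewrite big_ord_recl big_ord0 /dffact !big_ord0 addr0 !mulr1.
rewrite big_ord_recl.
under eq_bigr => i _ do rewrite binS natrD !mulrDl lift0 subSS.
rewrite big_split /= addrA.
have -> : 'C(n.+1, 0)%:R * dffact a lam 0 * dffact b lam (n.+1 - 0) +
  \sum_(i < n.+1) 'C(n, i.+1)%:R * dffact a lam i.+1 * dffact b lam (n - i)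
  = \sum_(i < n.+1) 'C(n, i)%:R * dffact a lam i * dffact b lam (n - i) * (b - (n - i)%:R * lam).
  rewrite big_ord_recr /= (@bin_small n n.+1) // mul0r mul0r addr0 addrC.
  rewrite [RHS]big_ord_recl /= !bin0 subn0 addrC.
  congr (_ + _); first by rewrite subn0 -[RHS]mulrA -dffactSr.
  apply: eq_bigr => i _; rewrite /bump leq0n add1n -[RHS]mulrA -dffactSr.
  by rewrite subnSK.
under [X in _ = _ + X]eq_bigr => i _ do rewrite dffactSr.
rewrite -big_split /= dffactSr IH mulr_suml; apply: eq_bigr => i _.
rewrite natrB; last by rewrite -ltnS.
ring.
Qed.


Lemma ffact_nat_big (m k : nat) : (m < k)%N -> ffact (m%:R : R) k = 0.
Proof.
move=> mk; rewrite /ffact (bigD1 (Ordinal mk)) //= subrr mul0r //.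
Qed.

Lemma ffact_nat_neq0 (m : nat) : ffact (m%:R : R) m != 0.
Proof.
rewrite /ffact; apply/prodf_neq0 => i _.
rewrite -natrB; last exact: ltnW.
by rewrite pnatr_eq0 subn_eq0 -ltnNge.
Qed.

Lemma ffact_uniq (N : nat) (c : nat -> R) :
  (forall x : R, \sum_(k < N) c k * ffact x k = 0) -> forall k, (k < N)%N -> c k = 0.
Proof.
move=> H k; elim/ltn_ind: k => m IH mN.
have := H m%:R; rewrite (bigD1 (Ordinal mN)) //= big1 ?addr0.
  by move/eqP; rewrite mulf_eq0 (negbTE (ffact_nat_neq0 m)) orbF => /eqP.
move=> i him0; have him : (i : nat) != m by [].
case: (ltngtP i m) => hi; last by rewrite hi eqxx in him.
  by rewrite IH // mul0r.
by rewrite ffact_nat_big // mulr0.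
Qed.

Definition padc (c : nat -> R) N k := if (k < N)%N then c k else 0.

Lemma pad_sum (c g : nat -> R) {N K : nat} : (N <= K)%N ->
  \sum_(k < N) c k * g k = \sum_(k < K) padc c N k * g k.
Proof.
move=> NK; rewrite (big_ord_widen K (fun k => c k * g k) NK) big_mkcond /=.
by apply: eq_bigr => i _; rewrite /padc; case: ifP; rewrite ?mul0r.
Qed.

Variable t : R.

Definition Lrel (f : R -> R) (v : R) := exists (c : nat -> R) (N : nat),
  (forall x, f x = \sum_(k < N) c k * ffact x k) /\ v = \sum_(k < N) c k * t ^+ k.

Lemma Lrel_uniq f v w : Lrel f v -> Lrel f w -> v = w.
Proof.
move=> [c [N [Hf ->]]] [d [M [Hg ->]]].
rewrite (pad_sum c (fun k => t ^+ k) (leq_addr M N)).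
rewrite (pad_sum d (fun k => t ^+ k) (leq_addl N M)).
have E : forall k, (k < N + M)%N -> padc c N k - padc d M k = 0.
  apply: ffact_uniq => x.
  under eq_bigr => i _ do rewrite mulrBl.
  rewrite sumrB -(pad_sum c (ffact x) (leq_addr M N)).
  by rewrite -(pad_sum d (ffact x) (leq_addl N M)) -Hf -Hg subrr.
apply: eq_bigr => i _; congr (_ * _); apply/eqP; rewrite -subr_eq0; apply/eqP.
exact: E.
Qed.

Arguments Lrel_uniq {f v w}.
Lemma Lrel_ext f g v : (forall x, f x = g x) -> Lrel f v -> Lrel g v.
Proof. by move=> E [c [N [H1 H2]]]; exists c, N; split=> // x; rewrite -E. Qed.

Arguments Lrel_ext {f g v}.
Lemma Lrel_val f v w : v = w -> Lrel f v -> Lrel f w.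
Proof. by move=> ->. Qed.

Arguments Lrel_val {f v w}.
Lemma Lrel_add f g v w : Lrel f v -> Lrel g w -> Lrel (fun x => f x + g x) (v + w).
Proof.
move=> [c [N [Hf ->]]] [d [M [Hg ->]]].
exists (fun k => padc c N k + padc d M k), (N + M)%N; split.
  move=> x; rewrite Hf Hg (pad_sum c (ffact x) (leq_addr M N)).
  rewrite (pad_sum d (ffact x) (leq_addl N M)) -big_split /=.
  by apply: eq_bigr => i _; rewrite mulrDl.
rewrite (pad_sum c (fun k => t ^+ k) (leq_addr M N)).
rewrite (pad_sum d (fun k => t ^+ k) (leq_addl N M)) -big_split /=.
by apply: eq_bigr => i _; rewrite mulrDl.
Qed.

Arguments Lrel_add {f g v w}.
Lemma Lrel_scale a f v : Lrel f v -> Lrel (fun x => a * f x) (a * v).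
Proof.
move=> [c [N [Hf ->]]]; exists (fun k => a * c k), N; split.
  by move=> x; rewrite Hf mulr_sumr; apply: eq_bigr => i _; rewrite mulrA.
by rewrite mulr_sumr; apply: eq_bigr => i _; rewrite mulrA.
Qed.

Arguments Lrel_scale a {f v}.
Lemma Lrel0 : Lrel (fun _ => 0) 0.
Proof. by exists (fun _ => 0), 0%N; split => [x|]; rewrite big_ord0. Qed.

Lemma Lrel_sum m (F : nat -> R -> R) (V : nat -> R) :
  (forall i, Lrel (F i) (V i)) ->
  Lrel (fun x => \sum_(i < m) F i x) (\sum_(i < m) V i).
Proof.
move=> H; elim: m => [|m IH].
  by rewrite big_ord0; apply: (Lrel_ext _ Lrel0) => x; rewrite big_ord0.
rewrite big_ord_recr /=; apply: (Lrel_ext _ (Lrel_add IH (H m))) => x.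
by rewrite big_ord_recr.
Qed.

Lemma Lrel_mulX g v : Lrel g v -> Lrel (fun y => y * g (y - 1)) (t * v).
Proof.
move=> [c [N [Hf ->]]].
exists (fun k => if k is k'.+1 then c k' else 0), N.+1; split.
  move=> x; rewrite big_ord_recl /= mul0r add0r Hf mulr_sumr.
  by apply: eq_bigr => i _; rewrite ffactS mulrCA.
rewrite big_ord_recl /= mul0r add0r mulr_sumr.
by apply: eq_bigr => i _; rewrite exprS mulrCA.
Qed.


Arguments Lrel_mulX {g v}.
Lemma Lrel_base lam (S : nat -> nat -> nat -> R) (hS : is_degen_rStirling lam S) r n :
  Lrel (fun x => dffact (x + r%:R) lam n) (rBell S r n t).
Proof. by exists (S r n), n.+1; split => // x; apply: hS. Qed.

Arguments Lrel_base {lam S}.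
Lemma main1 lam (S : nat -> nat -> nat -> R) (hS : is_degen_rStirling lam S) r n :
  rBell S r n.+1 t =
     \sum_(k < n.+1) 'C(n, k)%:R * (- lam) ^+ (n - k) * (n - k)`!%:R
                     * (t * rBell S r.+1 k t + r%:R * rBell S r k t).
Proof.
apply: (Lrel_uniq (Lrel_base hS r n.+1)).
pose c k := 'C(n, k)%:R * (- lam) ^+ (n - k) * (n - k)`!%:R.
have H := Lrel_sum n.+1
  (fun k x => c k * (x * dffact (x - 1 + (r.+1)%:R) lam k + r%:R * dffact (x + r%:R) lam k))
  (fun k => c k * (t * rBell S r.+1 k t + r%:R * rBell S r k t))
  (fun i => Lrel_scale (c i) (Lrel_add (Lrel_mulX (Lrel_base hS r.+1 i))
                                 (Lrel_scale r%:R (Lrel_base hS r i)))).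
apply: (Lrel_ext _ H) => x /=.
rewrite dffactS (dbinom (x + r%:R) (- lam)) mulr_sumr; apply: eq_bigr => i _.
have -> : x - 1 + (r.+1)%:R = x + r%:R by rewrite -addn1 natrD; ring.
rewrite dffact_neg /c; ring.
Qed.

Lemma main2 lam (S : nat -> nat -> nat -> R) (hS : is_degen_rStirling lam S) r n :
  rBell S r n.+1 t =
     \sum_(k < n.+1) 'C(n, k)%:R
                     * (r%:R * dffact (- lam) lam k + t * dffact (1 - lam) lam k)
                     * rBell S r (n - k) t.
Proof.
apply: (Lrel_uniq (Lrel_base hS r n.+1)).
pose c1 k := 'C(n, k)%:R * r%:R * dffact (- lam) lam k.
pose c2 k := 'C(n, k)%:R * dffact (1 - lam) lam k.
have H := Lrel_sum n.+1
  (fun k x => c1 k * dffact (x + r%:R) lam (n - k)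
              + c2 k * (x * dffact (x - 1 + r%:R) lam (n - k)))
  (fun k => c1 k * rBell S r (n - k) t + c2 k * (t * rBell S r (n - k) t))
  (fun i => Lrel_add (Lrel_scale (c1 i) (Lrel_base hS r (n - i)))
              (Lrel_scale (c2 i) (Lrel_mulX (Lrel_base hS r (n - i))))).
have E : \sum_(k < n.+1) (c1 k * rBell S r (n - k) t + c2 k * (t * rBell S r (n - k) t))
   = \sum_(k < n.+1) 'C(n, k)%:R
                     * (r%:R * dffact (- lam) lam k + t * dffact (1 - lam) lam k)
                     * rBell S r (n - k) t.
  by apply: eq_bigr => i _; rewrite /c1 /c2; ring.
apply: (Lrel_val E); apply: (Lrel_ext _ H) => x /=.
rewrite big_split /=.
have -> : \sum_(k < n.+1) c1 k * dffact (x + r%:R) lam (n - k)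
    = r%:R * dffact (- lam + (x + r%:R)) lam n.
  by rewrite dbinom mulr_sumr; apply: eq_bigr => i _; rewrite /c1; ring.
have -> : \sum_(k < n.+1) c2 k * (x * dffact (x - 1 + r%:R) lam (n - k))
    = x * dffact ((1 - lam) + (x - 1 + r%:R)) lam n.
  by rewrite dbinom mulr_sumr; apply: eq_bigr => i _; rewrite /c2; ring.
rewrite dffactS.
have -> : - lam + (x + r%:R) = x + r%:R - lam by ring.
have -> : (1 - lam) + (x - 1 + r%:R) = x + r%:R - lam by ring.
ring.
Qed.

End L.
Arguments main1 {R} t {lam S} hS r n.
Arguments main2 {R} t {lam S} hS r n.

Theorem theorem9 (R : rcfType) (lam : R) (S : nat -> nat -> nat -> R)
  (hS : is_degen_rStirling lam S) (r n : nat) (z : R[i]) :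
  let t := Normc.normc z ^+ 2 in
  (rBell S r n.+1 t =
     \sum_(k < n.+1) 'C(n, k)%:R * (- lam) ^+ (n - k) * (n - k)`!%:R
                     * (t * rBell S r.+1 k t + r%:R * rBell S r k t)
   /\ rBell S r n.+1 t =
     \sum_(k < n.+1) 'C(n, k)%:R
                     * (r%:R * dffact (- lam) lam k + t * dffact (1 - lam) lam k)
                     * rBell S r (n - k) t)
  /\
  (Normc.normc z = 1 ->
   rBell S r n.+1 1 =
     \sum_(k < n.+1) 'C(n, k)%:R * (- lam) ^+ (n - k) * (n - k)`!%:R
                     * (rBell S r.+1 k 1 + r%:R * rBell S r k 1)
   /\ rBell S r n.+1 1 =
     \sum_(k < n.+1) 'C(n, k)%:R
                     * (r%:R * dffact (- lam) lam k + dffact (1 - lam) lam k)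
                     * rBell S r (n - k) 1).
Proof.
move=> t; split; first by split; [exact: main1 | exact: main2].
move=> _; split.
  by rewrite (main1 1 hS); apply: eq_bigr => i _; rewrite mul1r.
by rewrite (main2 1 hS); apply: eq_bigr => i _; rewrite mul1r.
Qed.
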